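(* Let $0=t_0<t_1<t_2<\cdots$ and consider random variables $A\in\{a,a^*\}$, $A^D$, $A^M$, finite-valued mediators $M_0,M_1,\dots$, finite-valued covariates $C_0,C_1,\dots$ and a survival time $T$ with $P(T>0)=1$. For $j,j'\in\{a,a^*\}$ let $P_{j,j'}$ denote the interventional distribution under $do(A^D=j,A^M=j')$ and $P_{do(A=j)}$ that under $do(A=j)$, and let $P$ be the observational distribution. Assume all conditional probabilities below are well defined, and: (P1) $P_{j,j}=P_{do(A=j)}$ for $j\in\{a,a^*\}$; (A0) $A$ is randomised, i.e. $P_{do(A=j)}(E)=P(E\mid A=j)$ for every event $E$ in the variables $T,M_i,C_i$; (A1) for every $i\ge0$, $P_{a,a^*}(M_i=m_i\mid T>t_i,\overline M_{i-1}=\overline m_{i-1},\overline C_{i-1}=\overline c_{i-1})=P_{a^*,a^*}(M_i=m_i\mid T>t_i,\overline M_{i-1}=\overline m_{i-1},\overline C_{i-1}=\overline c_{i-1})$; (A2) for every $i\ge0$ and $t_i<s\le t_{i+1}$, $P_{a,a^*}(T>s\mid T>t_i,\overline M_{i}=\overline m_{i},\overline C_{i}=\overline c_{i})=P_{a,a}(T>s\mid T>t_i,\overline M_{i}=\overline m_{i},\overline C_{i}=\overline c_{i})$; (A3) for every $i\ge0$, $P_{a,a^*}(C_i=c_i\mid T>t_i,\overline M_{i}=\overline m_{i},\overline C_{i-1}=\overline c_{i-1})=P_{a,a}(C_i=c_i\mid T>t_i,\overline M_{i}=\overline m_{i},\overline C_{i-1}=\overline c_{i-1})$. Then for $t_k<t\le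 t_{k+1}$, $$P_{a,a^*}(T>t)=\sum_{\overline m_k,\overline c_k} P(T>t\mid T>t_k,\overline M_k=\overline m_k,\overline C_k=\overline c_k,A=a)\prod_{i=1}^{k}P(T>t_i\mid T>t_{i-1},\overline M_{i-1}=\overline m_{i-1},\overline C_{i-1}=\overline c_{i-1},A=a)$$ $$\times\prod_{i=0}^{k}P(M_i=m_i\mid T>t_i,\overline M_{i-1}=\overline m_{i-1},\overline C_{i-1}=\overline c_{i-1},A=a^* )\,P(C_i=c_i\mid T>t_i,\overline M_{i}=\overline m_{i},\overline C_{i-1}=\overline c_{i-1},A=a).$$ In particular, with $a^*=a$ this gives the g-computation formula for $P_{do(A=a)}(T>t)$.
   Context: $\overline M_i=(M_0,\dots,M_i)$ and $\overline C_i=(C_0,\dots,C_i)$; index $-1$ denotes the empty vector, so that for $i=0$ conditioning on $\overline M_{-1},\overline C_{-1}$ is vacuous. The sum runs over all value vectors $\overline m_k=(m_0,\dots,m_k)$, $\overline c_k=(c_0,\dots,c_k)$. The temporal order of realisation is $A, M_0, C_0, \{T>t_1\}, M_1, C_1, \{T>t_2\},\dots$ (with $M_i,C_i$ taking a symbolic value ''not available'' when $T\le t_i$). *)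

(* Defs.v *)
From HB Require Import structures.
From mathcomp Require Import all_boot all_order all_algebra.
From mathcomp Require Import all_classical all_reals all_analysis.
Set Implicit Arguments.
Unset Strict Implicit.
Unset Printing Implicit Defensive.
Import Order.TTheory GRing.Theory Num.Theory.
Local Open Scope classical_set_scope.
Local Open Scope ring_scope.

(* Elementary conditional probability mu(E | F) = mu(E & F) / mu(F),
   real-valued; by MathComp's convention x / 0 = 0 it is 0 when mu F = 0. *)
Definition condP {d : measure_display} {Omega : measurableType d} {R : realType}
  (mu : probability Omega R) (E F : set Omega) : R :=
  fine (mu (E `&` F)) / fine (mu F).

Definition Tgt {Omega : Type} {R : realType} (T : Omega -> R) (s : R) : set Omega :=
  [set w | s < T w].

Definition ev1 {Omega : Type} (V : nat -> Type) (X : forall i : nat, Omega -> V i)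
  (K : nat) (v : forall j : 'I_K, V j) (j : 'I_K) : set Omega :=
  [set w | X j w = v j].

(* event {X_j = v_j for all j < n}, i.e. \overline X_{n-1} = \overline v_{n-1}
   (the empty event-condition, i.e. the whole space, when n = 0) *)
Definition evbar {Omega : Type} (V : nat -> Type) (X : forall i : nat, Omega -> V i)
  (K : nat) (v : forall j : 'I_K, V j) (n : nat) : set Omega :=
  [set w | forall j : 'I_K, (j < n)%N -> X j w = v j].

(* Events "in the variables T, M_i, C_i": generators of the sigma-algebra *)
Definition genTMC {Omega : Type} {R : realType} (T : Omega -> R)
  (MT CT : nat -> Type) (M : forall i, Omega -> MT i) (C : forall i, Omega -> CT i)
  : set (set Omega) :=
  [set E | (exists B : set R, measurable B /\ E = T @^-1` B)
        \/ (exists i (x : MT i), E = M i @^-1` [set x])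
        \/ (exists i (x : CT i), E = C i @^-1` [set x])].

(* Main.v *)
Require Import Defs.
From HB Require Import structures.
From mathcomp Require Import all_boot all_order all_algebra.
From mathcomp Require Import all_classical all_reals all_analysis.
From mathcomp Require Import ring.
Import Order.TTheory GRing.Theory Num.Theory.
Local Open Scope classical_set_scope.
Local Open Scope ring_scope.

Lemma sgT (U : Type) (G : set (set U)) : <<s G >> setT.
Proof. have := @sigma_algebraCD _ setT G set0 (@sigma_algebra0 _ setT G). by rewrite setD0. Qed.

Lemma sgU (U : Type) (G : set (set U)) (A B : set U) :
  <<s G >> A -> <<s G >> B -> <<s G >> (A `|` B).
Proof.
move=> hA hB.
have -> : A `|` B = \bigcup_i (fun n : nat => if n == 0%N then A else B) i.
  apply/seteqP; split => x.
    by case=> h; [exists 0%N | exists 1%N].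
  by case=> n _; case: (n == 0%N) => h; [left|right].
by apply: sigma_algebra_bigcup => n; case: (n == 0%N).
Qed.

Lemma sgI (U : Type) (G : set (set U)) (A B : set U) :
  <<s G >> A -> <<s G >> B -> <<s G >> (A `&` B).
Proof.
move=> hA hB.
have -> : A `&` B = setT `\` ((setT `\` A) `|` (setT `\` B)).
  apply/seteqP; split => x.
    by case=> ha hb; split => // -[[_ ?]|[_ ?]].
  move=> [_ h]; split.
    by apply: contrapT => na; apply: h; left.
  by apply: contrapT => na; apply: h; right.
by apply: sigma_algebraCD; apply: sgU; apply: sigma_algebraCD.
Qed.

Lemma condP_chain {d : measure_display} {Omega : measurableType d} {R : realType}
  (mu : probability Omega R) (E F : set Omega) :
  measurable E -> measurable F ->
  fine (mu (E `&` F)) = condP mu E F * fine (mu F).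
Proof.
move=> mE mF; rewrite /condP.
have [h0|hn] := eqVneq (fine (mu F)) 0; last by rewrite mulfVK.
rewrite h0 mulr0.
have muF0 : mu F = 0%E.
  have : mu F \is a fin_num by rewrite fin_num_measure.
  by move=> /fineK <-; rewrite h0.
have : (mu (E `&` F) <= mu F)%E.
  by apply: le_measure; rewrite ?inE //; apply: measurableI.
rewrite muF0 => hle.
have -> : mu (E `&` F) = 0%E by apply/eqP; rewrite eq_le hle measure_ge0.
by [].
Qed.

Lemma fine_part_seq {d : measure_display} {Omega : measurableType d} {R : realType}
  (mu : probability Omega R) (X : eqType) (f : Omega -> X) (E : set Omega) (s : seq X) :
  measurable E -> (forall x, measurable (f @^-1` [set x])) -> uniq s ->
  measurable (E `&` [set w | f w \in s]) /\
  fine (mu (E `&` [set w | f w \in s])) = \sum_(x <- s) fine (mu (E `&` [set w | f w = x])).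
Proof.
move=> mE mf; elim: s => [|x s IH] /=.
  have -> : E `&` [set w | f w \in [::]] = set0.
    by apply/seteqP; split => w // [].
  by rewrite big_nil measure0.
move=> /andP [xs us]; have [ms hs] := IH us.
have eq1 : E `&` [set w | f w \in x :: s] =
    (E `&` [set w | f w = x]) `|` (E `&` [set w | f w \in s]).
  apply/seteqP; split => w /=.
    by case=> ew; rewrite in_cons => /orP [/eqP ->|h]; [left|right].
  by case=> -[ew h]; split => //; rewrite in_cons ?h ?eqxx // orbT.
have m1 : measurable (E `&` [set w | f w = x]) by apply: measurableI => //; exact: mf.
rewrite eq1; split; first exact: measurableU.
rewrite measureU //; last first.
  apply/seteqP; split => w // [[_ e]] [_ h]; move: h; rewrite /= e; by move=> h; rewrite h in xs.
rewrite fineD ?fin_num_measure //.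
by rewrite big_cons hs.
Qed.

Lemma fine_part {d : measure_display} {Omega : measurableType d} {R : realType}
  (mu : probability Omega R) (X : finType) (f : Omega -> X) (E : set Omega) :
  measurable E -> (forall x, measurable (f @^-1` [set x])) ->
  fine (mu E) = \sum_(x : X) fine (mu (E `&` [set w | f w = x])).
Proof.
move=> mE mf; have [_ h] := @fine_part_seq _ _ _ mu X f E (enum X) mE mf (enum_uniq X).
have eqE : E `&` [set w | f w \in enum X] = E.
  by apply/seteqP; split => w /=; [case | move=> ew; split => //; rewrite mem_enum].
by rewrite eqE in h; rewrite h big_enum.
Qed.

Lemma condP_transfer {d : measure_display} {Omega : measurableType d} {R : realType}
  (P Q : probability Omega R) (S : set (set Omega)) (Aj : set Omega)
  (hQ : forall X, S X -> fine (Q X) = condP P X Aj) (hST : S setT)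
  (E F : set Omega) : S (E `&` F) -> S F ->
  condP Q E F = condP P E (F `&` Aj).
Proof.
move=> sEF sF.
have hp : fine (P Aj) != 0.
  apply/eqP => h0; move: (hQ _ hST); rewrite probability_setT /condP h0 invr0 mulr0 /=.
  by move/eqP; rewrite oner_eq0.
rewrite /condP (hQ _ sEF) (hQ _ sF) /condP setIA.
set x := fine _; set y := fine (P (F `&` Aj)); set p := fine (P Aj).
have [->|hy] := eqVneq y 0; first by rewrite !mul0r !invr0 !mulr0.
by rewrite invfM invrK [y^-1 * p]mulrC mulrA mulfVK.
Qed.

Lemma bigsetI_mem (U : Type) (I : eqType) (r : seq I) (p : pred I) (F : I -> set U) (w : U) :
  (\big[setI/setT]_(j <- r | p j) F j) w <-> (forall j, j \in r -> p j -> F j w).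
Proof.
elim: r => [|x r IH]; first by rewrite big_nil.
rewrite big_cons; case: ifP => px; split.
- move=> [h1 /IH h2] j; rewrite in_cons => /orP [/eqP ->|jr] pj //; exact: h2.
- move=> h; split; first by apply: h; rewrite ?mem_head.
  by apply/IH => j jr pj; apply: h; rewrite // in_cons jr orbT.
- move=> /IH h2 j; rewrite in_cons => /orP [/eqP ej|jr] pj; [by rewrite ej px in pj | exact: h2].
- by move=> h; apply/IH => j jr pj; apply: h; rewrite // in_cons jr orbT.
Qed.

Lemma evbar_big {Omega : Type} (V : nat -> Type) (X : forall i : nat, Omega -> V i)
  (K : nat) (v : forall j : 'I_K, V j) (n : nat) :
  evbar X v n = \big[setI/setT]_(j : 'I_K | (j < n)%N) (X j @^-1` [set v j]).
Proof.
apply/seteqP; split => w.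
  move=> h; apply/bigsetI_mem => j _ jn; exact: h.
move=> /bigsetI_mem h j jn; apply: h => //.
Qed.

Lemma evbar_closed {Omega : Type} (V : nat -> Type) (X : forall i : nat, Omega -> V i)
  (K : nat) (v : forall j : 'I_K, V j) (n : nat) (Pr : set (set Omega)) :
  Pr setT -> (forall A B, Pr A -> Pr B -> Pr (A `&` B)) ->
  (forall j : 'I_K, Pr (X j @^-1` [set v j])) -> Pr (evbar X v n).
Proof.
move=> hT hI hX; rewrite evbar_big.
by apply: (big_ind Pr) => // j _; exact: hX.
Qed.

Definition restr (V : nat -> finType) (K n : nat) (h : (n <= K)%N)
  (v : {dffun forall j : 'I_K, V j}) : {dffun forall j : 'I_n, V j} :=
  [ffun j : 'I_n => (v (widen_ord h j) : V j)].
Arguments restr {V K n}.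

Lemma restr_iff {Omega : Type} (V : nat -> finType) (X : forall i : nat, Omega -> V i)
  (K n : nat) (h : (n <= K)%N) (v : {dffun forall j : 'I_K, V j})
  (j : 'I_n) (i : 'I_K) (w : Omega) :
  nat_of_ord j = nat_of_ord i -> (X j w = restr h v j <-> X i w = v i).
Proof.
case: j => j0 hj; case: i => i0 hi /= e; subst i0.
rewrite /restr ffunE /widen_ord /=.
by rewrite (bool_irrelevance (widen_ord_proof (Ordinal hj) h) hi).
Qed.

Lemma evbar_restr {Omega : Type} (V : nat -> finType) (X : forall i : nat, Omega -> V i)
  (K n : nat) (h : (n <= K)%N) (v : {dffun forall j : 'I_K, V j}) (p : nat) :
  (p <= n)%N -> evbar X (restr h v) p = evbar X v p.
Proof.
move=> pn; apply/seteqP; split => w /= hw j jp.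
  have jn : (j < n)%N by apply: leq_trans jp pn.
  have := hw (Ordinal jn) jp.
  by move/(@restr_iff _ _ X _ _ h v (Ordinal jn) j w erefl).
by apply/(@restr_iff _ _ X _ _ h v j (widen_ord h j) w erefl); apply: hw.
Qed.

Lemma ev1_restr {Omega : Type} (V : nat -> finType) (X : forall i : nat, Omega -> V i)
  (K : nat) (i : 'I_K) (h : (i.+1 <= K)%N) (v : {dffun forall j : 'I_K, V j}) :
  ev1 X (restr h v) ord_max = ev1 X v i.
Proof.
apply/seteqP; split => w /= hw.
  by apply/(@restr_iff _ _ X _ _ h v ord_max i w erefl).
by apply/(@restr_iff _ _ X _ _ h v ord_max i w erefl).
Qed.

Lemma evbarS {Omega : Type} (V : nat -> Type) (X : forall i : nat, Omega -> V i)
  (K : nat) (v : forall j : 'I_K, V j) (n : nat) (hn : (n < K)%N) :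
  evbar X v n.+1 = evbar X v n `&` ev1 X v (Ordinal hn).
Proof.
apply/seteqP; split => w /=.
  move=> h; split; first by move=> j jn; apply: h; apply: ltnW.
  by apply: h.
move=> [h1 h2] j; rewrite ltnS leq_eqVlt => /orP [/eqP e|jn]; last exact: h1.
have -> : j = Ordinal hn by apply: val_inj.
exact: h2.
Qed.

Lemma prod_step (R : comNzRingType) (K n : nat) (hn : (n < K)%N) (q : pred 'I_K)
  (F : 'I_K -> R) :
  \prod_(i < K | q i && (i < n.+1)%N) F i =
  (if q (Ordinal hn) then F (Ordinal hn) else 1) * \prod_(i < K | q i && (i < n)%N) F i.
Proof.
rewrite big_mkcondl [in RHS]big_mkcondl (bigD1 (Ordinal hn)) //=.
congr (_ * _); apply: eq_bigl => i /=.
have -> : (i != Ordinal hn) = (nat_of_ord i != n).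
  apply/idP/idP; apply: contra => /eqP e; apply/eqP; last by rewrite e.
  exact: val_inj.
by rewrite ltnS leq_eqVlt; case: (ltngtP i n).
Qed.

Lemma mTgt {d : measure_display} {Omega : measurableType d} {R : realType}
  (T : Omega -> R) (hTm : measurable_fun setT T) (s : R) : measurable (Tgt T s).
Proof.
have -> : Tgt T s = setT `&` T @^-1` `]s, +oo[%classic.
  by apply/seteqP; split => w /=; rewrite in_itv /= andbT; [move=> h; split | case].
by apply: hTm => //; exact: measurable_itv.
Qed.

Lemma Tgt_sub {Omega : Type} {R : realType} (T : Omega -> R) (s u : R) :
  s <= u -> Tgt T u `&` Tgt T s = Tgt T u.
Proof.
move=> su; apply/seteqP; split => w /=; first by case.
by move=> h; split => //; apply: le_lt_trans h.
Qed.

Lemma mev {d : measure_display} {Omega : measurableType d} (V : nat -> Type)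
  (X : forall i : nat, Omega -> V i)
  (hX : forall i (x : V i), measurable (X i @^-1` [set x]))
  (K : nat) (v : forall j : 'I_K, V j) (n : nat) : measurable (evbar X v n).
Proof.
apply: evbar_closed => //; by [move=> A B; apply: measurableI | move=> j; apply: hX].

Qed.

Lemma chain {d : measure_display} {Omega : measurableType d} {R : realType}
  (tt : nat -> R) (MT CT : nat -> finType) (T : Omega -> R)
  (M : forall i : nat, Omega -> MT i) (C : forall i : nat, Omega -> CT i)
  (ht0 : tt 0%N = 0) (htinc : forall i : nat, tt i < tt i.+1)
  (hTm : measurable_fun setT T)
  (hMm : forall i (x : MT i), measurable (M i @^-1` [set x]))
  (hCm : forall i (x : CT i), measurable (C i @^-1` [set x]))
  (mu : probability Omega R) (hmu0 : mu (Tgt T 0) = 1%E) (k : nat)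
  (m : {dffun forall j : 'I_k.+1, MT j}) (c : {dffun forall j : 'I_k.+1, CT j}) :
  forall n, (n <= k.+1)%N ->
  fine (mu (Tgt T (tt n.-1) `&` evbar M m n `&` evbar C c n)) =
  (\prod_(i < k.+1 | (0 < i)%N && (i < n)%N)
     condP mu (Tgt T (tt i)) (Tgt T (tt i.-1) `&` evbar M m i `&` evbar C c i))
  * \prod_(i < k.+1 | true && (i < n)%N)
     (condP mu (ev1 M m i) (Tgt T (tt i) `&` evbar M m i `&` evbar C c i)
      * condP mu (ev1 C c i) (Tgt T (tt i) `&` evbar M m i.+1 `&` evbar C c i)).
Proof.
have mT := mTgt T hTm.
have mEM := mev _ M hMm; have mEC := mev _ C hCm.
elim=> [_|n IH hn].
  rewrite !big_pred0; try by move=> i; rewrite ltn0 andbF.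
  have -> : Tgt T (tt 0%N.-1) `&` evbar M m 0 `&` evbar C c 0 = Tgt T 0.
    by rewrite /= ht0; apply/seteqP; split => w /=; [case; case | move=> h; split].
  by rewrite hmu0 mulr1.
have hn' : (n < k.+1)%N by [].
rewrite (@prod_step _ _ _ hn') (@prod_step _ _ _ hn') /=.
rewrite (@evbarS _ _ C _ c _ hn').
have -> : Tgt T (tt n) `&` evbar M m n.+1 `&` (evbar C c n `&` ev1 C c (Ordinal hn'))
   = ev1 C c (Ordinal hn') `&` (Tgt T (tt n) `&` evbar M m n.+1 `&` evbar C c n).
  by apply/seteqP; split => w /=; [case=> -[? ?] [? ?] | case=> ? [[? ?] ?]].
rewrite condP_chain //; try exact: hMm; try exact: hCm; try (by apply: measurableI; [apply: measurableI|]).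
set cC := condP mu (ev1 C c _) _.
have -> : Tgt T (tt n) `&` evbar M m n.+1 `&` evbar C c n
   = ev1 M m (Ordinal hn') `&` (Tgt T (tt n) `&` evbar M m n `&` evbar C c n).
  rewrite (@evbarS _ _ M _ m _ hn').
  by apply/seteqP; split => w /=; [case=> -[? [? ?]] ? | case=> ? [[? ?] ?]].
rewrite condP_chain //; try exact: hMm; try exact: hCm; try (by apply: measurableI; [apply: measurableI|]).
rewrite /cC; clear cC.
case: n IH hn hn' => [|n] IH hn hn'.
  rewrite IH //= !big_pred0; try by move=> i; rewrite ?ltn0 ?andbF.
  by rewrite !mul1r !mulr1 mulrC.
have -> : Tgt T (tt n.+1) `&` evbar M m n.+1 `&` evbar C c n.+1
   = Tgt T (tt n.+1) `&` (Tgt T (tt n) `&` evbar M m n.+1 `&` evbar C c n.+1).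
  rewrite !setIA (Tgt_sub T _ _ (ltW (htinc n))) //.
rewrite condP_chain //; try exact: hMm; try exact: hCm; try (by apply: measurableI; [apply: measurableI|]).
rewrite IH; last exact: ltnW.
rewrite /=.
set a1 := condP _ _ _; set a2 := condP _ _ _; set a3 := condP _ _ _.
set p1 := \prod_(_ < _ | _) _; set p2 := \prod_(_ < _ | _) _.
by ring.
Qed.

Ltac solveS SI ST SM SC SeM SeC :=
  repeat (match goal with |- _ (setI _ _) => apply SI end);
  first [ apply ST | apply SeM | apply SeC | apply SM | apply SC ].

Lemma condP_ext {d : measure_display} {Omega : measurableType d} {R : realType}
  (mu1 mu2 : probability Omega R) : (forall E, mu1 E = mu2 E) ->
  forall E F, condP mu1 E F = condP mu2 E F.
Proof. by move=> h E F; rewrite /condP !h. Qed.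

Theorem mainTheorem7
  (d : measure_display) (Omega : measurableType d) (R : realType)
  (tt : nat -> R)
  (AT : Type) (a astar : AT)
  (MT CT : nat -> finType)
  (A : Omega -> AT) (T : Omega -> R)
  (M : forall i : nat, Omega -> MT i) (C : forall i : nat, Omega -> CT i)
  (P : probability Omega R)
  (Pint : AT -> AT -> probability Omega R)
  (Pdo : AT -> probability Omega R)
  (* time grid 0 = t_0 < t_1 < t_2 < ... *)
  (ht0 : tt 0%N = 0)
  (htinc : forall i : nat, tt i < tt i.+1)
  (* measurability of the variables *)
  (hAm : forall x : AT, measurable (A @^-1` [set x]))
  (hTm : measurable_fun setT T)
  (hMm : forall i (x : MT i), measurable (M i @^-1` [set x]))
  (hCm : forall i (x : CT i), measurable (C i @^-1` [set x]))
  (* A takes values in {a, a^*} *)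
  (hA : forall w, A w = a \/ A w = astar)
  (* P(T > 0) = 1 (under every distribution considered) *)
  (hT0 : P (Tgt T 0) = 1%E)
  (hT0int : forall j j', (j = a \/ j = astar) -> (j' = a \/ j' = astar) ->
            Pint j j' (Tgt T 0) = 1%E)
  (hT0do : forall j, (j = a \/ j = astar) -> Pdo j (Tgt T 0) = 1%E)
  (* (P1) *)
  (hP1 : forall j, (j = a \/ j = astar) -> forall E, Pint j j E = Pdo j E)
  (* (A0) randomisation of A *)
  (hA0 : forall j, (j = a \/ j = astar) ->
         forall E, <<s genTMC T M C >> E ->
         fine (Pdo j E) = condP P E [set w | A w = j])
  (* (A1) *)
  (hA1 : forall (i : nat) (m : {dffun forall j : 'I_i.+1, MT j})
           (c : {dffun forall j : 'I_i.+1, CT j}),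
     condP (Pint a astar) (ev1 M m ord_max)
       (Tgt T (tt i) `&` evbar M m i `&` evbar C c i)
     = condP (Pint astar astar) (ev1 M m ord_max)
       (Tgt T (tt i) `&` evbar M m i `&` evbar C c i))
  (* (A2) *)
  (hA2 : forall (i : nat) (m : {dffun forall j : 'I_i.+1, MT j})
           (c : {dffun forall j : 'I_i.+1, CT j}) (s : R),
     tt i < s -> s <= tt i.+1 ->
     condP (Pint a astar) (Tgt T s)
       (Tgt T (tt i) `&` evbar M m i.+1 `&` evbar C c i.+1)
     = condP (Pint a a) (Tgt T s)
       (Tgt T (tt i) `&` evbar M m i.+1 `&` evbar C c i.+1))
  (* (A3) *)
  (hA3 : forall (i : nat) (m : {dffun forall j : 'I_i.+1, MT j})
           (c : {dffun forall j : 'I_i.+1, CT j}),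
     condP (Pint a astar) (ev1 C c ord_max)
       (Tgt T (tt i) `&` evbar M m i.+1 `&` evbar C c i)
     = condP (Pint a a) (ev1 C c ord_max)
       (Tgt T (tt i) `&` evbar M m i.+1 `&` evbar C c i))
  (k : nat) (t : R) (htk : tt k < t) (htk1 : t <= tt k.+1) :
  fine (Pint a astar (Tgt T t)) =
  \sum_(m : {dffun forall j : 'I_k.+1, MT j})
  \sum_(c : {dffun forall j : 'I_k.+1, CT j})
    condP P (Tgt T t)
      (Tgt T (tt k) `&` evbar M m k.+1 `&` evbar C c k.+1 `&` [set w | A w = a])
    * (\prod_(i < k.+1 | (0 < i)%N)
        condP P (Tgt T (tt i))
          (Tgt T (tt i.-1) `&` evbar M m i `&` evbar C c i `&` [set w | A w = a]))
    * (\prod_(i < k.+1)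
        (condP P (ev1 M m i)
           (Tgt T (tt i) `&` evbar M m i `&` evbar C c i `&` [set w | A w = astar])
         * condP P (ev1 C c i)
           (Tgt T (tt i) `&` evbar M m i.+1 `&` evbar C c i `&` [set w | A w = a]))).
Proof.
pose S := <<s genTMC T M C >>.
have ha : a = a \/ a = astar by left.
have has : astar = a \/ astar = astar by right.
have ST : forall s, S (Tgt T s).
  move=> s; apply: sub_sigma_algebra; left; exists `]s, +oo[%classic; split.
    exact: measurable_itv.
  by apply/seteqP; split => w /=; rewrite in_itv /= andbT.
have SM : forall i x, S (M i @^-1` [set x]).
  by move=> i x; apply: sub_sigma_algebra; right; left; exists i, x.
have SC : forall i x, S (C i @^-1` [set x]).
  by move=> i x; apply: sub_sigma_algebra; right; right; exists i, x.
have SI : forall A B, S A -> S B -> S (A `&` B).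
  by move=> ? ? ? ?; exact: sgI.
have SeM : forall K (v : forall j : 'I_K, MT j) n, S (evbar M v n).
  by move=> K v n; apply: evbar_closed => //; exact: sgT.
have SeC : forall K (v : forall j : 'I_K, CT j) n, S (evbar C v n).
  by move=> K v n; apply: evbar_closed => //; exact: sgT.
have SgT : S setT by exact: sgT.
have tra := fun j (hj : j = a \/ j = astar) =>
   @condP_transfer _ _ _ P (Pdo j) S _ (hA0 j hj) SgT.
have mT := mTgt T hTm.
have mEM := mev _ M hMm; have mEC := mev _ C hCm.
pose Q := Pint a astar.

pose fM : Omega -> {dffun forall j : 'I_k.+1, MT j} := fun w => [ffun j : 'I_k.+1 => (M j w : MT j)].
pose fC : Omega -> {dffun forall j : 'I_k.+1, CT j} := fun w => [ffun j : 'I_k.+1 => (C j w : CT j)].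
have eM : forall v, [set w | fM w = v] = evbar M v k.+1.
  move=> v; apply/seteqP; split => w /=.
    by move=> <- j _; rewrite /fM ffunE.
  by move=> h; apply/ffunP => j; rewrite /fM ffunE; apply: h.
have eC : forall v, [set w | fC w = v] = evbar C v k.+1.
  move=> v; apply/seteqP; split => w /=.
    by move=> <- j _; rewrite /fC ffunE.
  by move=> h; apply/ffunP => j; rewrite /fC ffunE; apply: h.
rewrite (@fine_part _ _ _ Q _ fM); last 2 first.
- exact: mT.
- by move=> x; have := eM x; rewrite /preimage /set1 /= => ->.
apply: eq_bigr => m _.
rewrite (@fine_part _ _ _ Q _ fC); last 2 first.
- by apply: measurableI => //; rewrite eM.
- by move=> x; have := eC x; rewrite /preimage /set1 /= => ->.
apply: eq_bigr => c _.
rewrite eM eC.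
have mH : forall n, measurable (Tgt T (tt n) `&` evbar M m k.+1 `&` evbar C c k.+1).
  by move=> n; apply: measurableI; [apply: measurableI|].
have eS : Tgt T t `&` evbar M m k.+1 `&` evbar C c k.+1 =
   Tgt T t `&` (Tgt T (tt k) `&` evbar M m k.+1 `&` evbar C c k.+1).
  by rewrite !setIA (Tgt_sub T _ _ (ltW htk)).
rewrite eS condP_chain //.
have hQ0 : Q (Tgt T 0) = 1%E by apply: hT0int.
rewrite (@chain _ _ _ tt MT CT T M C ht0 htinc hTm hMm hCm Q hQ0 k m c k.+1 (leqnn _)).
have pT : forall F : 'I_k.+1 -> R,
   \prod_(i < k.+1 | (0 < i)%N && (i < k.+1)%N) F i = \prod_(i < k.+1 | (0 < i)%N) F i.
  by move=> F; apply: eq_bigl => i; rewrite ltn_ord andbT.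
have pMC : forall F : 'I_k.+1 -> R,
   \prod_(i < k.+1 | true && (i < k.+1)%N) F i = \prod_(i < k.+1) F i.
  by move=> F; apply: eq_bigl => i; rewrite ltn_ord.
rewrite pT pMC mulrA.
congr (_ * _ * _).
- have := hA2 k (restr (leqnn k.+1) m) (restr (leqnn k.+1) c) t htk htk1.
  rewrite !evbar_restr // => ->.
  rewrite (condP_ext _ _ (hP1 a ha)) tra //.
  by solveS SI ST SM SC SeM SeC.
  by solveS SI ST SM SC SeM SeC.
- apply: eq_bigr => -[[|j] hi] //= _.
  have hj : (j.+1 <= k.+1)%N by apply: ltnW.
  have := hA2 j (restr hj m) (restr hj c) (tt j.+1) (htinc j) (lexx _).
  rewrite !evbar_restr // => ->.
  rewrite (condP_ext _ _ (hP1 a ha)) tra //.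
  by solveS SI ST SM SC SeM SeC.
  by solveS SI ST SM SC SeM SeC.
- apply: eq_bigr => i _; congr (_ * _).
  + have := hA1 i (restr (ltn_ord i) m) (restr (ltn_ord i) c).
    rewrite ev1_restr !evbar_restr // => ->.
    rewrite (condP_ext _ _ (hP1 astar has)) tra //.
    by solveS SI ST SM SC SeM SeC.
    by solveS SI ST SM SC SeM SeC.
  + have := hA3 i (restr (ltn_ord i) m) (restr (ltn_ord i) c).
    rewrite ev1_restr !evbar_restr // => ->.
    rewrite (condP_ext _ _ (hP1 a ha)) tra //.
    by solveS SI ST SM SC SeM SeC.
    by solveS SI ST SM SC SeM SeC.
Qed.
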